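(* Let $\lambda>\sup_{x\in\{a=0\}}\hat\lambda(x)$ and let $f\in C^1(A)$ be a bounded function satisfying $a(x)f'+H(x,f)=\lambda$ in $A$. Extend $f$ to $\mathbb R$ by $f(x):=p^+_\lambda(x)$ for $x\in\{a=0\}$. Then $u(x):=\int_0^xf(z)\,dz$ is a Lipschitz viscosity supersolution of $a(x)u''+H(x,u')=\lambda$ in $\mathbb R$.
   Context: Deterministic setting: $a:\mathbb R\to[0,1]$ with $\sqrt a$ $\kappa$-Lipschitz and (A1$'$): $a\not\equiv0$ and every connected component of $A:=\{a>0\}$ is a bounded interval. $H:\mathbb R\times\mathbb R\to\mathbb R$ in $\mathscr H_{sqc}(\alpha_0,\alpha_1,\gamma,\eta)$, $\gamma>2$, $\eta>0$: (H1) $\alpha_0|p|^\gamma-1/\alpha_0\le H(x,p)\le\alpha_1(|p|^\gamma+1)$, (H2) $|H(x,p)-H(x,q)|\le\alpha_1(|p|+|q|+1)^{\gamma-1}|p-q|$, (H3) $|H(x,p)-H(y,p)|\le\alpha_1(|p|^\gamma+1)|x-y|$, $H(x,\cdot)$ strictly quasiconvex with unique minimizer $\hat p(x)$, $H(x,p_1)-H(x,p_2)\ge\eta|p_1-p_2|$ for $p_1<p_2\le\hat p(x)$, $H(x,p_2)-H(x,p_1)\ge\eta|p_1-p_2|$ for $p_2>p_1\ge\hat p(x)$. $\hat\lambda(x):=\min_pH(x,p)$; for $\lambda\ge\hat\lambda(x)$, $\{p:H(x,p)\le\lambda\}=[p^-_\lambda(x),p^+_\lambda(x)]$. A continuous $u$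 is a viscosity supersolution of $au''+H(x,u')=\lambda$ if $a(x_0)\varphi''(x_0)+H(x_0,\varphi'(x_0))\le\lambda$ whenever a $C^2$ $\varphi$ touches $u$ from below at $x_0$. *)

(* Defs.v *)
From Stdlib Require Import Reals.
From mathcomp Require Import all_boot all_algebra.
From mathcomp Require Import all_classical all_reals all_analysis.
From mathcomp Require Import Rstruct Rstruct_topology.
From Coquelicot Require Import Coquelicot.
Open Scope R_scope.

(* |p|^gamma with real exponent gamma (powR 0 g = 0 for g <> 0) *)
Definition rpow (x y : R) : R := powR x y.

Definition sqrt_lipschitz (a : R -> R) (kappa : R) : Prop :=
  forall x y, Rabs (sqrt (a x) - sqrt (a y)) <= kappa * Rabs (x - y).

(* The connected component of x in A = {a>0} is {y | [min x y, max x y] ⊆ A}. *)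
Definition seg_in (P : R -> Prop) (x y : R) : Prop :=
  forall z, Rmin x y <= z <= Rmax x y -> P z.

(* (A1'): a is not identically 0 and every connected component of {a>0}
   is a bounded interval (components of subsets of R are intervals). *)
Definition A1' (a : R -> R) : Prop :=
  (exists x, a x <> 0) /\
  (forall x, 0 < a x ->
     exists M, forall y, seg_in (fun z => 0 < a z) x y -> Rabs y <= M).

Definition H_sqc (H : R -> R -> R) (alpha0 alpha1 gamma eta : R) : Prop :=
  0 < alpha0 /\
  (forall x p, alpha0 * rpow (Rabs p) gamma - 1 / alpha0 <= H x p /\
               H x p <= alpha1 * (rpow (Rabs p) gamma + 1)) /\
  (forall x p q, Rabs (H x p - H x q) <=
                 alpha1 * rpow (Rabs p + Rabs q + 1) (gamma - 1) * Rabs (p - q)) /\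
  (forall x y p, Rabs (H x p - H y p) <=
                 alpha1 * (rpow (Rabs p) gamma + 1) * Rabs (x - y)) /\
  (forall x p q t, p <> q -> 0 < t < 1 ->
     H x (t * p + (1 - t) * q) < Rmax (H x p) (H x q)) /\
  (exists phat : R -> R,
     (forall x p, H x (phat x) <= H x p) /\
     (forall x p, (forall q, H x p <= H x q) -> p = phat x) /\
     (forall x p1 p2, p1 < p2 <= phat x -> H x p1 - H x p2 >= eta * Rabs (p1 - p2)) /\
     (forall x p1 p2, phat x <= p1 < p2 -> H x p2 - H x p1 >= eta * Rabs (p1 - p2))).

Definition hat_lambda (H : R -> R -> R) (x : R) : R :=
  real (Glb_Rbar (fun v => exists p, v = H x p)).

Definition p_plus (H : R -> R -> R) (lam x : R) : R :=
  real (Lub_Rbar (fun p => H x p <= lam)).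

Definition sup_hat_lambda_zero (a : R -> R) (H : R -> R -> R) : Rbar :=
  Lub_Rbar (fun v => exists x, a x = 0 /\ v = hat_lambda H x).

Definition C1_on_A (a f : R -> R) : Prop :=
  forall x, 0 < a x -> ex_derive f x /\ continuous (Derive f) x.

Definition bounded_on_A (a f : R -> R) : Prop :=
  exists M, forall x, 0 < a x -> Rabs (f x) <= M.

Definition extend_f (a : R -> R) (H : R -> R -> R) (lam : R) (f : R -> R) (x : R) : R :=
  if Rlt_dec 0 (a x) then f x else p_plus H lam x.

Definition prim0 (g : R -> R) (t : R) : R :=
  if Rle_dec 0 t then Rintegral lebesgue_measure (fun z : R => 0 <= z <= t) g
  else - Rintegral lebesgue_measure (fun z : R => t <= z <= 0) g.

Definition lipschitz_R (u : R -> R) : Prop :=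
  exists L, forall x y, Rabs (u x - u y) <= L * Rabs (x - y).

Definition C2_R (phi : R -> R) : Prop :=
  forall x, ex_derive phi x /\ ex_derive (Derive phi) x /\
            continuous (Derive (Derive phi)) x.

Definition touches_below (phi u : R -> R) (x0 : R) : Prop :=
  phi x0 = u x0 /\
  exists d, 0 < d /\ forall y, Rabs (y - x0) < d -> phi y <= u y.

Definition visc_supersolution (a : R -> R) (H : R -> R -> R) (lam : R) (u : R -> R) : Prop :=
  (forall x, continuous u x) /\
  forall (phi : R -> R) (x0 : R), C2_R phi -> touches_below phi u x0 ->
    a x0 * Derive (Derive phi) x0 + H x0 (Derive phi x0) <= lam.

(* Main.v *)
Require Import Defs.
From Stdlib Require Import Reals Lra Psatz Classical.
From mathcomp Require Import all_boot all_algebra.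
From mathcomp Require Import all_classical all_reals all_analysis.
From mathcomp Require Import measurable_realfun.
From mathcomp Require Import Rstruct Rstruct_topology.
From Coquelicot Require Import Coquelicot.

Module MI.
Import mathcomp.order.order.Order.TTheory GRing.Theory Num.Theory.
Import numFieldNormedType.Exports.

Definition RR : realType := R.

Section Integ.
Local Open Scope classical_set_scope.
Local Open Scope ring_scope.
Notation mu := (@lebesgue_measure RR).

Lemma setcc (x y : RR) : (fun z : RR => Rle x z /\ Rle z y) = [set` `[x, y]].
Proof.
apply/funext => z; apply/propext; rewrite /= in_itv /=; split.
  by move=> [/RleP -> /RleP ->].
by move=> /andP[/RleP ? /RleP ?].
Qed.

Lemma int_bdd (g : RR -> RR) b1 b2 (x y : RR) (K : RR) : measurable_fun setT g ->
  (forall t, `|g t| <= K) -> mu.-integrable [set` Interval (BSide b1 x) (BSide b2 y)] (EFin \o g).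
Proof.
move=> mg gK; apply: measurable_bounded_integrable => //.
- have := lebesgue_measure_itv (Interval (BSide b1 x) (BSide b2 y)); rewrite /= => ->. by case: ifP => // _; rewrite -EFinD ltry.
- exact: measurable_funS mg.
- exists K; split; first exact: num_real.
  move=> M KM t _ /=; exact: le_trans (gK t) (ltW KM).
Qed.

Variables (F : RR -> RR) (K : RR).
Hypotheses (mF : measurable_fun setT F) (FK : forall t, `|F t| <= K).

Definition RI (x y : RR) := Rintegral mu [set` `[x, y]] F.

Lemma RI_split x y z : x <= y -> y <= z -> RI x z = RI x y + RI y z.
Proof.
move=> xy yz.
have := @Rintegral_itvB RR F (BLeft x) (BRight z) y (@int_bdd F _ _ _ _ K mF FK).
rewrite !bnd_simp => /(_ xy yz) H.
rewrite Rintegral_itv_obnd_cbnd in H; last exact: (@int_bdd F _ _ _ _ K mF FK).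
rewrite /RI -H. by rewrite addrC subrK.
Qed.

Lemma RI_bound x y c e : x <= y -> (forall t, x <= t <= y -> `|F t - c| <= e) ->
  `|RI x y - c * (y - x)| <= e * (y - x).
Proof.
move=> xy Fce.
have muxy : fine (mu [set` `[x, y]]) = y - x.
  have := lebesgue_measure_itv `[x, y]; rewrite /= => ->.
  case: ifP => /=. by [].
  move=> /negbT; rewrite -leNgt => yx; have -> : y = x by apply/le_anti/andP.
  by rewrite subrr.
have mI : measurable [set` `[x, y]] by exact: measurable_itv.
have ic : mu.-integrable [set` `[x, y]] (EFin \o (fun=> c)).
  apply: (@int_bdd (fun=> c) _ _ _ _ `|c| (measurable_cst _)) => t; exact: lexx.
rewrite /RI -muxy -Rintegral_cst // -RintegralB //; last exact: (@int_bdd F _ _ _ _ K mF FK).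
have iFc : mu.-integrable [set` `[x, y]] (EFin \o (fun t => F t - c)).
  apply: (@int_bdd _ _ _ _ _ (K + `|c|)).
  - by apply: measurable_funB => //; exact: measurable_cst.
  - move=> t; rewrite (le_trans (ler_normB _ _)) // lerD2r. exact: FK.
rewrite (le_trans (le_normr_Rintegral _ _)) //.
rewrite -Rintegral_cst //; apply: le_Rintegral => //.
- exact: (integrable_norm iFc).
- by apply: (@int_bdd (fun=> e) _ _ _ _ `|e| (measurable_cst _)) => t; exact: lexx.
Qed.


Lemma prim0E t : prim0 F t = if Rle_dec 0 t then RI 0 t else - RI t 0.
Proof. by rewrite /prim0 /RI !setcc. Qed.

Lemma prim0_diff x y : x <= y -> prim0 F y - prim0 F x = RI x y.
Proof.
move=> xy; rewrite !prim0E.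
case: Rle_dec => y0; case: Rle_dec => x0.
- have /RleP x0' := x0; have /RleP y0' := y0.
  by rewrite (@RI_split 0 x y) // addrC addKr.
- have x0' : x <= 0 by apply/RleP; apply: Rlt_le; apply: Rnot_le_lt.
  have /RleP y0' := y0.
  by rewrite opprK (@RI_split x 0 y) // addrC.
- have /RleP x0' := x0; exfalso; apply: y0; apply/RleP; exact: le_trans x0' xy.
- have x0' : x <= 0 by apply/RleP; apply: Rlt_le; apply: Rnot_le_lt.
  have y0' : y <= 0 by apply/RleP; apply: Rlt_le; apply: Rnot_le_lt.
  by rewrite opprK (@RI_split x y 0) // /= addrC -addrA subrr addr0.
Qed.
End Integ.

Local Open Scope ring_scope.
Lemma prim0_bound (F : R -> R) (K : R) :
  measurable_fun setT (F : RR -> RR) -> (forall t, Rabs (F t) <= K)%coqR ->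
  forall x y c e, (x <= y)%coqR -> (forall t, x <= t <= y -> Rabs (F t - c) <= e)%coqR ->
  (Rabs (prim0 F y - prim0 F x - c * (y - x)) <= e * (y - x))%coqR.
Proof.
move=> mF FK x y c e /RleP xy H; apply/RleP.
have FK' : forall t : RR, `|F t| <= K by move=> t; apply/RleP; rewrite -RabsE; exact: FK.
have -> : (prim0 F y - prim0 F x - c * (y - x))%coqR = (prim0 F y - prim0 F x) - c * (y - x) by [].
have -> : (e * (y - x))%coqR = e * (y - x) by [].
rewrite RabsE (@prim0_diff F K mF FK' x y xy).
apply: RI_bound => // t /andP[/RleP ? /RleP ?]; apply/RleP; rewrite -RabsE; exact: H.
Qed.


Notation mopen := topology_structure.open.
Local Open Scope classical_set_scope.
Lemma open_epsdelta (V : set RR) :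
  (forall x, V x -> exists d, (0 < d)%coqR /\ forall y, (Rabs (y - x) < d)%coqR -> V y) ->
  mopen V.
Proof.
move=> H; rewrite openE => x Vx; have [d [d0 Hd]] := H x Vx.
apply/nbhs_ballP; exists d; first exact/RltP.
move=> y; rewrite /ball /= => /RltP hy; apply: Hd.
by rewrite Rabs_minus_sym RabsE.
Qed.

Lemma meas_piece (P : R -> bool) (f p : R -> R) (V : set RR) :
  mopen [set x : RR | P x] -> mopen V -> (forall x, ~~ P x -> V x) ->
  (forall x, P x -> continuity_pt f x) -> (forall x, V x -> continuity_pt p x) ->
  measurable_fun setT ((fun x => if P x then f x else p x) : RR -> RR).
Proof.
move=> oA oV AV cf cp.
have -> : [set: RR] = [set x | P x] `|` ~` [set x | P x].
  by rewrite setUCr.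
have mA : measurable [set x : RR | P x] by exact: open_measurable.
apply/measurable_funU => //; first exact: measurableC.
split.
- apply: (@eq_measurable_fun _ _ _ _ _ (f : RR -> RR)).
    by move=> x; rewrite inE /= => ->.
  apply: open_continuous_measurable_fun => // x; rewrite inE => Px.
  exact/continuity_pt_cvg/cf.
- apply: (@eq_measurable_fun _ _ _ _ _ (p : RR -> RR)).
    by move=> x; rewrite inE /= => /negP/negbTE ->.
  apply: (measurable_funS (E := V)) => //.
  + exact: open_measurable.
  + by move=> x /negP; exact: AV.
  + apply: open_continuous_measurable_fun => // x; rewrite inE => Vx.
    exact/continuity_pt_cvg/cp.
Qed.

End MI.
Import MI.

Module MA.
Open Scope R_scope.

Lemma deriv_neg_side (g : R -> R) x l : is_derive g x l -> l < 0 ->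
  forall d, 0 < d ->
  (exists t, x - d < t < x /\ g x < g t) /\ (exists t, x < t < x + d /\ g t < g x).
Proof.
move=> /is_derive_Reals Hd l0 d d0.
have [del Hdel] := Hd (- l) ltac:(lra).
have hp : 0 < Rmin d del / 2 by have := cond_pos del; apply Rmin_case => *; lra.
have hd : Rmin d del <= d by apply Rmin_l.
have hdel : Rmin d del <= del by apply Rmin_r.
remember (Rmin d del / 2) as h eqn:Eh.
split.
- exists (x + - h); split; first (split; lra).
  have := Hdel (- h) ltac:(apply: Rlt_not_eq; lra) ltac:(rewrite Rabs_Ropp Rabs_pos_eq; lra).
  move=> /Rabs_lt_between [_ H2].
  set q := (g (x + - h) - g x) / - h in H2.
  have E : g (x + - h) - g x = q * (- h) by rewrite /q; field; lra.
  nra.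
- exists (x + h); split; first (split; lra).
  have := Hdel h ltac:(apply: Rgt_not_eq; lra) ltac:(rewrite Rabs_pos_eq; lra).
  move=> /Rabs_lt_between [_ H2].
  set q := (g (x + h) - g x) / h in H2.
  have E : g (x + h) - g x = q * h by rewrite /q; field; lra.
  nra.
Qed.

Lemma deriv_pos_side (g : R -> R) x l : is_derive g x l -> 0 < l ->
  forall d, 0 < d ->
  (exists t, x - d < t < x /\ g t < g x) /\ (exists t, x < t < x + d /\ g x < g t).
Proof.
move=> Hd l0 d d0.
have Hd' : is_derive (fun t => - g t) x (- l) by apply: (is_derive_opp g).
have [[t [Ht1 Ht2]] [s [Hs1 Hs2]]] := deriv_neg_side _ _ _ Hd' ltac:(lra) d d0.
split; [exists t | exists s]; split => //; lra.
Qed.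

Lemma eps_of_cont f x : continuity_pt f x ->
  forall eps, 0 < eps -> exists alp, 0 < alp /\
    forall y, Rabs (y - x) < alp -> Rabs (f y - f x) < eps.
Proof.
move=> H eps e0; have [alp [a0 Ha]] := H eps e0.
exists alp; split => // y hy.
case: (Req_dec y x) => [->|ne]; first by rewrite Rminus_diag Rabs_R0.
by apply: (Ha y); split => //; split => //; apply: not_eq_sym.
Qed.

Lemma cont_of_eps f x : (forall eps, 0 < eps -> exists alp, 0 < alp /\
    forall y, Rabs (y - x) < alp -> Rabs (f y - f x) < eps) -> continuity_pt f x.
Proof.
move=> H eps e0; have [alp [a0 Ha]] := H eps e0.
by exists alp; split => // y [_ hy]; apply: Ha.
Qed.

Lemma derive_cont f x l : is_derive f x l -> continuity_pt f x.
Proof.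
move=> H; apply/continuity_pt_filterlim; apply: ex_derive_continuous.
by exists l.
Qed.

Section Acont.
Variables (a : R -> R) (kappa : R).
Hypothesis a0 : forall x, 0 <= a x.
Hypothesis alip : forall x y, Rabs (sqrt (a x) - sqrt (a y)) <= kappa * Rabs (x - y).

Lemma a_cont x : continuity_pt a x.
Proof.
have cs : continuity_pt (fun y => sqrt (a y)) x.
  apply: cont_of_eps => eps e0.
  exists (eps / (Rabs kappa + 1)); split.
    apply: Rdiv_lt_0_compat => //; have := Rabs_pos kappa; lra.
  move=> y hy; apply: (Rle_lt_trans _ _ _ (alip y x)).
  have k0 := Rabs_pos kappa.
  have hy' : Rabs (y - x) * (Rabs kappa + 1) < eps.
    have := Rmult_lt_compat_r (Rabs kappa + 1) _ _ ltac:(lra) hy.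
    by rewrite /Rdiv Rmult_assoc Rinv_l; [rewrite Rmult_1_r|lra].
  have := Rle_abs kappa; have := Rabs_pos (y - x); nra.
apply: (continuity_pt_ext (fun y => sqrt (a y) * sqrt (a y))).
  by move=> y; rewrite sqrt_sqrt.
exact: continuity_pt_mult.
Qed.

Lemma a_quad c z : a c = 0 -> a z <= kappa ^ 2 * (z - c) ^ 2.
Proof.
move=> ac; have := alip z c; rewrite ac sqrt_0 Rminus_0_r.
rewrite Rabs_pos_eq; last exact: sqrt_pos.
move=> H; have s0 := sqrt_pos (a z).
have -> : a z = sqrt (a z) * sqrt (a z) by rewrite sqrt_sqrt.
rewrite -(pow2_abs (z - c)); have := Rabs_pos (z - c); nra.
Qed.

Lemma zero_left x0 z1 : a x0 = 0 -> x0 < z1 -> 0 < a z1 ->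
  exists c, x0 <= c < z1 /\ a c = 0 /\ forall z, c < z <= z1 -> 0 < a z.
Proof.
move=> ax0 xz az1.
pose E := fun y => x0 <= y <= z1 /\ a y = 0.
have [c [cub club]] : {m | is_lub E m}.
  apply: completeness; first by exists z1 => y [[]].
  by exists x0; split => //; lra.
have xc : x0 <= c by apply: cub; split => //; lra.
have cz : c <= z1 by apply: club => y [[]].
have ac : a c = 0.
  case: (Req_dec (a c) 0) => // ne.
  have acp : 0 < a c by have := a0 c; lra.
  have [alp [al0 Hal]] := eps_of_cont _ _ (a_cont c) (a c / 2) ltac:(lra).
  have : ~ (forall y, E y -> y <= c - alp / 2).
    move=> H; have := club (c - alp / 2) H; lra.
  move=> Hn; have [y Hy0] := not_all_ex_not _ _ Hn; have [[Ey1 Ey2] Hy] := imply_to_and _ _ Hy0.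
  have yc : y <= c by apply: cub.
  have := Hal y ltac:(rewrite Rabs_left1; lra).
  rewrite Ey2 => /Rabs_lt_between; lra.
exists c; split; first split => //.
  case: (Rle_lt_or_eq_dec _ _ cz) => // e; rewrite e in ac; lra.
split => // z [zc zz]; case: (Req_dec (a z) 0) => [e|ne].
  have : z <= c by apply: cub; split => //; lra.
  lra.
have := a0 z; lra.
Qed.


Lemma blowup (g : R -> R) c z1 m theta M :
  c < z1 -> a c = 0 -> 0 < theta ->
  (forall z, c < z <= z1 -> 0 < a z) ->
  (forall z, c < z <= z1 -> Rabs (g z) <= M) ->
  (forall z, c < z <= z1 -> ex_derive g z) ->
  (forall z, c < z <= z1 -> m < g z -> Derive g z <= - theta / a z) ->
  g z1 <= m.
Proof.
move=> cz ac th0 apos gM gd gD.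
apply: Rnot_lt_le => mg.
have k2 : 0 < kappa ^ 2.
  have := a_quad c z1 ac; have := apos z1 ltac:(lra).
  have := pow2_ge_0 kappa; have := pow2_ge_0 (z1 - c).
  move=> h1 h2 h3 h4; case: (Rle_lt_or_eq_dec _ _ h2) => // e.
  rewrite -e in h4; lra.
have step1 : forall z, c < z <= z1 -> g z1 <= g z.
  move=> z hz; apply: Rnot_lt_le => gz.
  have [Mx [HM HMx]] : exists Mx, (forall t, z <= t <= z1 -> g t <= g Mx) /\ z <= Mx <= z1.
    apply: continuity_ab_maj; first lra.
    move=> t ht; apply: (derive_cont _ _ (Derive g t)).
    apply: Derive_correct; apply: gd; lra.
  have gMx : g z1 <= g Mx by apply: HM; lra.
  have Dneg : Derive g Mx < 0.
    apply: (Rle_lt_trans _ _ _ (gD Mx ltac:(lra) ltac:(lra))).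
    have := apos Mx ltac:(lra) => aM.
    have : 0 < theta / a Mx by apply: Rdiv_lt_0_compat.
    lra.
  case: (Rle_lt_or_eq_dec _ _ (proj1 HMx)) => zM; last first.
    rewrite -zM in gMx; lra.
  have [[t [ht1 ht2]] _] := deriv_neg_side g Mx _ (Derive_correct _ _ (gd Mx ltac:(lra))) Dneg (Mx - z) ltac:(lra).
  have := HM t ltac:(lra); lra.
pose w := fun t => g t - theta / (kappa ^ 2 * (t - c)).
pose dw := fun t => Derive g t + theta / (kappa ^ 2 * (t - c) ^ 2).
have wd : forall t, c < t <= z1 -> is_derive w t (dw t).
  move=> t ht; rewrite /w /dw.
  have -> : Derive g t + theta / (kappa ^ 2 * (t - c) ^ 2) =
    Derive g t - (- theta / (kappa ^ 2 * (t - c) ^ 2)) by field; split; nra.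
  apply: is_derive_minus; first by apply: Derive_correct; apply: gd.
  auto_derive; first nra.
  field; nra.
have step2 : forall z, c < z <= z1 -> w z1 <= w z.
  move=> z hz.
  have := MVT_gen w z z1 dw.
  rewrite Rmin_left; last lra. rewrite Rmax_right; last lra.
  case.
  - move=> t ht; apply: wd; lra.
  - move=> t ht; apply: (derive_cont _ _ (dw t)); apply: wd; lra.
  move=> xi [hxi Exi].
  have : dw xi <= 0.
    rewrite /dw.
    have hxa := apos xi ltac:(lra).
    have hq := a_quad c xi ac.
    have := gD xi ltac:(lra) ltac:(have := step1 xi ltac:(lra); lra).
    have : theta / (kappa ^ 2 * (xi - c) ^ 2) <= theta / a xi.
      apply: Rmult_le_compat_l; first lra.
      apply: Rinv_le_contravar => //.
    lra.
  have : 0 <= z1 - z by lra.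
  move=> h1 h2; have : dw xi * (z1 - z) <= 0 by nra.
  lra.
pose W := w z1.
pose A := Rabs (M - W) + 1.
have A0 : 0 < A by have := Rabs_pos (M - W); rewrite /A; lra.
pose del := Rmin (z1 - c) (theta / (kappa ^ 2 * A)).
have del0 : 0 < del.
  apply: Rmin_glb_lt; first lra.
  apply: Rdiv_lt_0_compat => //; nra.
have del1 : del <= z1 - c by apply: Rmin_l.
have del2 : del <= theta / (kappa ^ 2 * A) by apply: Rmin_r.
have hz : c < c + del <= z1 by lra.
have := step2 (c + del) hz.
rewrite /w -/W.
have -> : c + del - c = del by ring.
move=> Hw.
have hX : A <= theta / (kappa ^ 2 * del).
  have H1 : del * (kappa ^ 2 * A) <= theta.
    have := Rmult_le_compat_r (kappa ^ 2 * A) _ _ ltac:(nra) del2.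
    by rewrite /Rdiv Rmult_assoc Rinv_l; [rewrite Rmult_1_r|nra].
  apply: (Rmult_le_reg_r (kappa ^ 2 * del)); first nra.
  rewrite /Rdiv Rmult_assoc Rinv_l; last nra.
  nra.
have := gM (c + del) hz.
have := Rle_abs (M - W).
move=> h1 /Rabs_le_between h2.
have hA : A = Rabs (M - W) + 1 by []. have hW : W = g z1 - theta / (kappa ^ 2 * (z1 - c)) by []. lra.
Qed.
End Acont.

Section Mirror.
Variables (a : R -> R) (kappa : R).
Hypothesis a0 : forall x, 0 <= a x.
Hypothesis alip : forall x y, Rabs (sqrt (a x) - sqrt (a y)) <= kappa * Rabs (x - y).

Let a' := fun x => a (- x).
Let a0' : forall x, 0 <= a' x. Proof. by move=> x; apply: a0. Qed.
Let alip' : forall x y, Rabs (sqrt (a' x) - sqrt (a' y)) <= kappa * Rabs (x - y).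
Proof.
move=> x y; rewrite /a'; have := alip (- x) (- y).
have -> : - x - - y = - (x - y) by ring.
by rewrite Rabs_Ropp.
Qed.

Lemma zero_right x0 z1 : a x0 = 0 -> z1 < x0 -> 0 < a z1 ->
  exists c, z1 < c <= x0 /\ a c = 0 /\ forall z, z1 <= z < c -> 0 < a z.
Proof.
move=> ax xz az.
have [c [[h1 h2] [h3 h4]]] := zero_left a' kappa a0' alip' (- x0) (- z1)
  ltac:(by rewrite /a' Ropp_involutive) ltac:(lra) ltac:(by rewrite /a' Ropp_involutive).
exists (- c); split; first lra.
split => // z hz; have := h4 (- z) ltac:(lra).
by rewrite /a' Ropp_involutive.
Qed.

Lemma blowup_r (g : R -> R) c z1 m theta M :
  z1 < c -> a c = 0 -> 0 < theta ->
  (forall z, z1 <= z < c -> 0 < a z) ->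
  (forall z, z1 <= z < c -> Rabs (g z) <= M) ->
  (forall z, z1 <= z < c -> ex_derive g z) ->
  (forall z, z1 <= z < c -> g z < m -> Derive g z <= - theta / a z) ->
  m <= g z1.
Proof.
move=> zc ac th0 apos gM gd gD.
pose g' := fun x => - g (- x).
have g'd : forall x, - c < x <= - z1 -> is_derive g' x (Derive g (- x)).
  move=> x hx; rewrite /g'.
  have -> : Derive g (- x) = - (scal (-1) (Derive g (- x))).
    by rewrite /scal /= /mult /=; ring.
  apply: (is_derive_opp (fun y => g (- y))).
  apply: (is_derive_comp g (fun y => - y)).
    apply: Derive_correct; apply: gd; lra.
  by auto_derive.
have := blowup a' kappa a0' alip' g' (- c) (- z1) (- m) theta M ltac:(lra)
  ltac:(by rewrite /a' Ropp_involutive) th0.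
move=> H.
have : g' (- z1) <= - m.
  apply: H.
  - move=> z hz; apply: apos; lra.
  - move=> z hz; rewrite /g' Rabs_Ropp; apply: gM; lra.
  - move=> z hz; exists (Derive g (- z)); exact: g'd.
  - move=> z hz hm; rewrite (is_derive_unique _ _ _ (g'd z hz)).
    apply: gD; first lra.
    rewrite /g' in hm; lra.
by rewrite /g' Ropp_involutive; lra.
Qed.
End Mirror.

End MA.
Import MA.

Module MB.
Open Scope R_scope.
Open Scope R_scope.

Lemma LubB (E : R -> Prop) q0 B : E q0 -> (forall q, E q -> q <= B) ->
  q0 <= real (Lub_Rbar E) <= B.
Proof.
move=> Eq0 HB; have [ub lub] := Lub_Rbar_correct E.
have h1 := ub q0 Eq0.
have h2 : Rbar_le (Lub_Rbar E) B by apply: lub => q Eq; apply: HB.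
move: h1 h2; case: (Lub_Rbar E) => //= r h1 h2; lra.
Qed.

Lemma LubApprox (E : R -> Prop) q0 B : E q0 -> (forall q, E q -> q <= B) ->
  forall eps, 0 < eps -> exists q, E q /\ real (Lub_Rbar E) - eps < q.
Proof.
move=> Eq0 HB eps e0; have [ub lub] := Lub_Rbar_correct E.
have [h1 h2] := LubB E q0 B Eq0 HB.
apply: NNPP => H.
have : Rbar_le (Lub_Rbar E) (real (Lub_Rbar E) - eps).
  apply: lub => q Eq /=; apply: Rnot_lt_le => hq; apply: H; by exists q.
move: (ub q0 Eq0) h1 h2; case: (Lub_Rbar E) => [r||] /= h0 h1 h2 h3 //; lra.
Qed.

Section HSec.
Variables (H : R -> R -> R) (eta lam L0 U0 : R) (phat : R -> R).
Hypothesis eta0 : 0 < eta.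
Hypothesis HL : forall x p, L0 <= H x p.
Hypothesis HU : forall x, H x 0 <= U0.
Hypothesis Hxc : forall p x eps, 0 < eps -> exists d, 0 < d /\
  forall y, Rabs (y - x) < d -> Rabs (H y p - H x p) < eps.
Hypothesis Hqc : forall x p q t, p <> q -> 0 < t < 1 ->
  H x (t * p + (1 - t) * q) < Rmax (H x p) (H x q).
Hypothesis Hmin : forall x p, H x (phat x) <= H x p.
Hypothesis Heta1 : forall x p1 p2, p1 < p2 <= phat x -> H x p1 - H x p2 >= eta * Rabs (p1 - p2).
Hypothesis Heta2 : forall x p1 p2, phat x <= p1 < p2 -> H x p2 - H x p1 >= eta * Rabs (p1 - p2).

Definition pp x := real (Lub_Rbar (fun p => H x p <= lam)).
Definition Dd := Rabs (lam - L0) / eta.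

Lemma mono_r x q1 q2 : phat x <= q1 <= q2 -> H x q1 <= H x q2.
Proof.
move=> [h1 h2]; case: (Rle_lt_or_eq_dec _ _ h2) => [lt|->]; last lra.
have := Heta2 x q1 q2 ltac:(lra); have := Rabs_pos (q1 - q2); nra.
Qed.

Lemma mono_l x q1 q2 : q1 <= q2 <= phat x -> H x q2 <= H x q1.
Proof.
move=> [h1 h2]; case: (Rle_lt_or_eq_dec _ _ h1) => [lt|->]; last lra.
have := Heta1 x q1 q2 ltac:(lra); have := Rabs_pos (q1 - q2); nra.
Qed.

Lemma phat_bound x : Rabs (phat x) <= (U0 - L0) / eta.
Proof.
have h0 := HU x; have hl := HL x (phat x).
have key : eta * Rabs (phat x) <= U0 - L0.
  case: (Rtotal_order (phat x) 0) => [lt|[eq|gt]].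
  - have := Heta2 x (phat x) 0 ltac:(lra).
    rewrite Rminus_0_r; lra.
  - rewrite eq in hl *; rewrite Rabs_R0; lra.
  - have := Heta1 x 0 (phat x) ltac:(lra).
    rewrite Rminus_0_l Rabs_Ropp; lra.
apply: (Rmult_le_reg_l eta) => //.
have -> : eta * ((U0 - L0) / eta) = U0 - L0 by field; lra.
lra.
Qed.

Lemma Iub x q : H x q <= lam -> q <= phat x + Dd.
Proof.
move=> hq; rewrite /Dd.
case: (Rle_lt_dec q (phat x)) => h.
  have : 0 <= Rabs (lam - L0) / eta.
    apply: Rmult_le_pos; [exact: Rabs_pos| left; exact: Rinv_0_lt_compat].
  lra.
have := Heta2 x (phat x) q ltac:(lra).
rewrite Rabs_left1; last lra.
have := HL x (phat x); have := Rle_abs (lam - L0).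
move=> h1 h2 h3.
have : eta * (q - phat x) <= Rabs (lam - L0) by lra.
move=> h4.
have : q - phat x <= Rabs (lam - L0) / eta.
  apply: (Rmult_le_reg_l eta) => //.
  have -> : eta * (Rabs (lam - L0) / eta) = Rabs (lam - L0) by field; lra.
  lra.
lra.
Qed.

Lemma qc_mid x lo mid hi : lo < mid < hi -> H x lo <= lam -> H x hi <= lam ->
  H x mid < lam.
Proof.
move=> [h1 h2] hl hh.
pose t := (hi - mid) / (hi - lo).
have t1 : 0 < t < 1.
  rewrite /t; split.
    apply: Rdiv_lt_0_compat; lra.
  apply: (Rmult_lt_reg_r (hi - lo)); first lra.
  rewrite /Rdiv Rmult_assoc Rinv_l; lra.
have E : mid = t * lo + (1 - t) * hi by rewrite /t; field; lra.
have := Hqc x lo hi t ltac:(lra) t1; rewrite -E.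
have : Rmax (H x lo) (H x hi) <= lam by apply: Rmax_lub.
lra.
Qed.

Lemma pp_bounds x q0 : H x q0 <= lam -> q0 <= pp x <= phat x + Dd.
Proof. move=> h; rewrite /pp; apply: (LubB (fun p => H x p <= lam) q0) => // q; exact: Iub. Qed.

Lemma pp_cont z0 q0 : H z0 q0 < lam -> continuity_pt pp z0.
Proof.
move=> hq0; apply: cont_of_eps => eps e0.
set P := pp z0.
have [hP1 hP2] := pp_bounds z0 q0 ltac:(lra).
have [L [hL1 [hL2 hL3]]] : exists L, P - eps / 2 <= L /\ L <= P /\ H z0 L < lam.
  case: (Rle_lt_dec (P - eps / 2) q0) => h.
    by exists q0; split => //; split => //; lra.
  have [q [Eq hq]] := LubApprox (fun p => H z0 p <= lam) q0 _ ltac:(simpl; lra) (Iub z0) (eps / 2) ltac:(lra).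
  change (real (Lub_Rbar (fun p => H z0 p <= lam))) with (pp z0) in hq; rewrite -/P in hq.
  have qP : q <= P by case: (pp_bounds z0 q Eq) => h1 h2; rewrite -/P in h1; lra.
  exists (P - eps / 2); split; first lra.
  split; first lra.
  apply: (qc_mid z0 q0 (P - eps / 2) q); [split; lra|lra|exact: Eq].
have hPe : lam < H z0 (P + eps / 2).
  apply: Rnot_le_lt => h.
  have := pp_bounds z0 _ h; rewrite -/P; lra.
have [d1 [d10 Hd1]] := Hxc L z0 (lam - H z0 L) ltac:(lra).
have [d2 [d20 Hd2]] := Hxc (P + eps / 2) z0 (H z0 (P + eps / 2) - lam) ltac:(lra).
exists (Rmin d1 d2); split; first by apply: Rmin_glb_lt.
move=> y hy.
have hy1 : Rabs (y - z0) < d1 by apply: (Rlt_le_trans _ _ _ hy); apply: Rmin_l.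
have hy2 : Rabs (y - z0) < d2 by apply: (Rlt_le_trans _ _ _ hy); apply: Rmin_r.
have hL : H y L < lam by have := Hd1 y hy1 => /Rabs_lt_between; lra.
have hU : lam < H y (P + eps / 2) by have := Hd2 y hy2 => /Rabs_lt_between; lra.
have ub : forall q, H y q <= lam -> q <= P + eps / 2.
  move=> q hq; apply: Rnot_lt_le => hqq.
  have := qc_mid y L (P + eps / 2) q ltac:(lra) ltac:(lra) hq; lra.
have := LubB (fun p => H y p <= lam) L (P + eps / 2) ltac:(simpl; lra) ub.
change (real (Lub_Rbar (fun p => H y p <= lam))) with (pp y) => hb.
apply/Rabs_lt_between; lra.
Qed.


Hypothesis Hjc : forall x0 p0 eps, 0 < eps -> exists d, 0 < d /\
  forall z q, Rabs (z - x0) < d -> Rabs (q - p0) < d -> Rabs (H z q - H x0 p0) < eps.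

Variables (a : R -> R) (kappa : R) (f : R -> R) (M K : R) (u : R -> R).
Hypothesis a0 : forall x, 0 <= a x.
Hypothesis alip : forall x y, Rabs (sqrt (a x) - sqrt (a y)) <= kappa * Rabs (x - y).
Hypothesis fM : forall x, 0 < a x -> Rabs (f x) <= M.
Hypothesis fd : forall x, 0 < a x -> ex_derive f x.
Hypothesis feq : forall x, 0 < a x -> a x * Derive f x + H x (f x) = lam.
Hypothesis Hzero : forall x, a x = 0 -> H x (phat x) < lam.
Definition FF x := if Rlt_dec 0 (a x) then f x else pp x.
Hypothesis FK : forall x, Rabs (FF x) <= K.
Hypothesis Hu : forall x y c e, x <= y -> (forall t, x <= t <= y -> Rabs (FF t - c) <= e) ->
  Rabs (u y - u x - c * (y - x)) <= e * (y - x).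

Lemma Df_bound t theta : 0 < a t -> lam + theta < H t (f t) -> Derive f t <= - theta / a t.
Proof.
move=> at0 hH; have := feq t at0 => e.
have -> : Derive f t = (lam - H t (f t)) / a t by field_simplify_eq; lra.
apply: Rmult_le_compat_r; first by left; apply: Rinv_0_lt_compat.
lra.
Qed.

Lemma visc_zero x0 phi p : a x0 = 0 -> is_derive phi x0 p ->
  phi x0 = u x0 -> (exists d, 0 < d /\ forall y, Rabs (y - x0) < d -> phi y <= u y) ->
  H x0 p <= lam.
Proof.
move=> ax0 dphi e0 [d [d0 Hd]].
apply: Rnot_lt_le => hp.
set ph := phat x0.
have hph : H x0 ph < lam by apply: Hzero.
set theta := (H x0 p - lam) / 2.
have th0 : 0 < theta by rewrite /theta; lra.
have [d1 [d10 Hd1]] := Hjc x0 p theta th0.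
have [d2 [d20 Hd2]] := Hxc ph x0 (lam - H x0 ph) ltac:(lra).
set rho := Rmin d1 d2.
have rho0 : 0 < rho by apply: Rmin_glb_lt.
have rho1 : rho <= d1 by apply: Rmin_l.
have rho2 : rho <= d2 by apply: Rmin_r.
have Hnear : forall z q, Rabs (z - x0) < rho -> Rabs (q - p) < d1 -> lam + theta < H z q.
  move=> z q hz hq; have := Hd1 z q ltac:(lra) hq => /Rabs_lt_between.
  rewrite /theta; lra.
have Hph : forall z, Rabs (z - x0) < rho -> H z ph < lam.
  move=> z hz; have := Hd2 z ltac:(lra) => /Rabs_lt_between; lra.
case: (Rtotal_order ph p) => [php|[php|php]]; last first.
-
  set eps := Rmin (d1 / 2) ((ph - p) / 2).
  have e0' : 0 < eps by apply: Rmin_glb_lt; lra.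
  have e1 : eps <= d1 / 2 by apply: Rmin_l.
  have e2 : eps <= (ph - p) / 2 by apply: Rmin_r.
  have Hi : forall z q, Rabs (z - x0) < rho -> q <= p + eps -> lam + theta < H z q.
    move=> z q hz hq.
    case: (Rle_lt_dec p q) => pq.
      apply: Hnear => //; rewrite Rabs_pos_eq; lra.
    have hz' : lam + theta < H z p by apply: Hnear => //; rewrite Rminus_diag Rabs_R0.
    case: (Rle_lt_dec p (phat z)) => pz.
      have := mono_l z q p ltac:(lra); lra.
    have := mono_r z p ph ltac:(lra); have := Hph z hz; lra.
  have Hii : forall z, x0 - rho < z <= x0 -> p + eps <= FF z.
    move=> z hz; have hzr : Rabs (z - x0) < rho by rewrite Rabs_left1; lra.
    rewrite /FF; case: Rlt_dec => az.
    + have zx : z < x0 by case: (Req_dec z x0) => [e|]; [rewrite e ax0 in az; lra|lra].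
      apply: Rnot_lt_le => fz.
      have [c [[c1 c2] [c3 c4]]] := zero_right a kappa a0 alip x0 z ax0 zx az.
      apply: (Rlt_not_le _ _ fz).
      apply: (blowup_r a kappa a0 alip f c z (p + eps) theta M c1 c3 th0 c4).
      * move=> t ht; apply: fM; exact: c4.
      * move=> t ht; apply: fd; exact: c4.
      * move=> t ht hft; apply: Df_bound; first exact: c4.
        apply: Hi; last lra.
        rewrite Rabs_left1; lra.
    + have az0 : a z = 0 by have := a0 z; lra.
      case: (pp_bounds z ph ltac:(left; apply: Hph hzr)) => h1 h2.
      simpl; lra.
  have [del Hdel] := (proj1 (is_derive_Reals _ _ _) dphi) (eps / 2) ltac:(lra).
  have dl := cond_pos del.
  have hm0 : 0 < Rmin d (Rmin rho del) by repeat apply: Rmin_glb_lt.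
  have hm1 : Rmin d (Rmin rho del) <= d := Rmin_l _ _.
  have hm2 : Rmin d (Rmin rho del) <= rho := Rle_trans _ _ _ (Rmin_r _ _) (Rmin_l _ _).
  have hm3 : Rmin d (Rmin rho del) <= del := Rle_trans _ _ _ (Rmin_r _ _) (Rmin_r _ _).
  remember (Rmin d (Rmin rho del) / 2) as h eqn:Eh.
  have Hint : Rabs (u x0 - u (x0 - h) - (p + eps + K) / 2 * (x0 - (x0 - h))) <=
      (K - p - eps) / 2 * (x0 - (x0 - h)).
    apply: Hu; first lra.
    move=> t ht; apply/Rabs_le_between.
    have := Hii t ltac:(lra); have := FK t => /Rabs_le_between; lra.
  have := Hdel (- h) ltac:(apply: Rlt_not_eq; lra) ltac:(rewrite Rabs_Ropp Rabs_pos_eq; lra).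
  move=> /Rabs_lt_between [_ Hq].
  set Q := (phi (x0 + - h) - phi x0) / - h in Hq.
  have EQ : phi (x0 + - h) - phi x0 = Q * (- h) by rewrite /Q; field; lra.
  have := Hd (x0 - h) ltac:(rewrite Rabs_left1; lra).
  replace (x0 - (x0 - h)) with h in Hint by ring.
  move/Rabs_le_between: Hint => [Hi1 Hi2].
  replace (x0 + - h) with (x0 - h) in EQ by ring.
  move=> hphi.
  have : (p + eps) * h <= Q * h by lra.
  move=> hh; have : p + eps <= Q by apply: (Rmult_le_reg_r h); lra.
  lra.
- rewrite php in hph; lra.
-
  set eps := Rmin (d1 / 2) ((p - ph) / 2).
  have e0' : 0 < eps by apply: Rmin_glb_lt; lra.
  have e1 : eps <= d1 / 2 by apply: Rmin_l.
  have e2 : eps <= (p - ph) / 2 by apply: Rmin_r.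
  have Hi : forall z q, Rabs (z - x0) < rho -> p - eps <= q -> lam + theta < H z q.
    move=> z q hz hq.
    case: (Rle_lt_dec q p) => pq.
      apply: Hnear => //; rewrite Rabs_left1; lra.
    have hz' : lam + theta < H z p by apply: Hnear => //; rewrite Rminus_diag Rabs_R0.
    case: (Rle_lt_dec (phat z) p) => pz.
      have := mono_r z p q ltac:(lra); lra.
    have := mono_l z ph p ltac:(lra); have := Hph z hz; lra.
  have Hii : forall z, x0 <= z < x0 + rho -> FF z <= p - eps.
    move=> z hz; have hzr : Rabs (z - x0) < rho by rewrite Rabs_pos_eq; lra.
    rewrite /FF; case: Rlt_dec => az.
    + have zx : x0 < z by case: (Req_dec z x0) => [e|]; [rewrite e ax0 in az; lra|lra].
      apply: Rnot_lt_le => fz.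
      have [c [[c1 c2] [c3 c4]]] := zero_left a kappa a0 alip x0 z ax0 zx az.
      apply: (Rlt_not_le _ _ fz).
      apply: (blowup a kappa a0 alip f c z (p - eps) theta M c2 c3 th0 c4).
      * move=> t ht; apply: fM; exact: c4.
      * move=> t ht; apply: fd; exact: c4.
      * move=> t ht hft; apply: Df_bound; first exact: c4.
        apply: Hi; last lra.
        rewrite Rabs_pos_eq; lra.
    + simpl.
      apply: (proj2 (LubB (fun q => H z q <= lam) ph (p - eps) _ _)).
        by left; apply: Hph.
      move=> q hq; apply: Rnot_lt_le => hq'.
      have := Hi z q hzr ltac:(lra); lra.
  have [del Hdel] := (proj1 (is_derive_Reals _ _ _) dphi) (eps / 2) ltac:(lra).
  have dl := cond_pos del.
  have hm0 : 0 < Rmin d (Rmin rho del) by repeat apply: Rmin_glb_lt.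
  have hm1 : Rmin d (Rmin rho del) <= d := Rmin_l _ _.
  have hm2 : Rmin d (Rmin rho del) <= rho := Rle_trans _ _ _ (Rmin_r _ _) (Rmin_l _ _).
  have hm3 : Rmin d (Rmin rho del) <= del := Rle_trans _ _ _ (Rmin_r _ _) (Rmin_r _ _).
  remember (Rmin d (Rmin rho del) / 2) as h eqn:Eh.
  have Hint : Rabs (u (x0 + h) - u x0 - (p - eps - K) / 2 * (x0 + h - x0)) <=
      (p - eps + K) / 2 * (x0 + h - x0).
    apply: Hu; first lra.
    move=> t ht; apply/Rabs_le_between.
    have := Hii t ltac:(lra); have := FK t => /Rabs_le_between; lra.
  have := Hdel h ltac:(apply: Rgt_not_eq; lra) ltac:(rewrite Rabs_pos_eq; lra).
  move=> /Rabs_lt_between [Hq _].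
  set Q := (phi (x0 + h) - phi x0) / h in Hq.
  have EQ : phi (x0 + h) - phi x0 = Q * h by rewrite /Q; field; lra.
  have := Hd (x0 + h) ltac:(rewrite Rabs_pos_eq; lra).
  replace (x0 + h - x0) with h in Hint by ring.
  move/Rabs_le_between: Hint => [Hi1 Hi2].
  move=> hphi.
  have : Q * h <= (p - eps) * h by lra.
  move=> hh; have : Q <= p - eps by apply: (Rmult_le_reg_r h); lra.
  lra.
Qed.

Lemma u_deriv t : (forall eps, 0 < eps -> exists alp, 0 < alp /\
    forall y, Rabs (y - t) < alp -> Rabs (FF y - FF t) < eps) ->
  is_derive u t (FF t).
Proof.
move=> Hc; apply/is_derive_Reals => eps e0.
have [alp [al0 Hal]] := Hc (eps / 2) ltac:(lra).
exists (mkposreal alp al0) => h hn /= hh.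
have key : Rabs (u (t + h) - u t - FF t * h) <= eps / 2 * Rabs h.
  case: (Rle_lt_dec 0 h) => h0.
  - have := Hu t (t + h) (FF t) (eps / 2) ltac:(lra).
    replace (t + h - t) with h by ring; rewrite (Rabs_pos_eq h h0); apply.
    move=> y hy; left; apply: Hal; rewrite Rabs_pos_eq; [|lra].
    rewrite Rabs_pos_eq in hh; lra.
  - have := Hu (t + h) t (FF t) (eps / 2) ltac:(lra).
    replace (t - (t + h)) with (- h) by ring; rewrite (Rabs_left h h0).
    move=> H1.
    have : Rabs (u t - u (t + h) - FF t * - h) <= eps / 2 * - h.
      apply: H1 => y hy; left; apply: Hal; rewrite Rabs_left1; [|lra].
      rewrite Rabs_left in hh; lra.
    replace (u t - u (t + h) - FF t * - h) with (- (u (t + h) - u t - FF t * h)) by ring.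
    by rewrite Rabs_Ropp.
replace ((u (t + h) - u t) / h - FF t) with ((u (t + h) - u t - FF t * h) / h) by (field; exact: hn).
rewrite Rabs_div //.
have hp : 0 < Rabs h by apply: Rabs_pos_lt.
apply: (Rmult_lt_reg_r (Rabs h)) => //.
rewrite /Rdiv Rmult_assoc Rinv_l; last lra.
rewrite Rmult_1_r; nra.
Qed.

Hypothesis fc : forall x, 0 < a x -> continuity_pt (Derive f) x.

Lemma visc_pos x0 phi : 0 < a x0 -> (forall x, ex_derive phi x) ->
  (forall x, ex_derive (Derive phi) x) -> continuity_pt (Derive (Derive phi)) x0 ->
  phi x0 = u x0 -> (exists d, 0 < d /\ forall y, Rabs (y - x0) < d -> phi y <= u y) ->
  a x0 * Derive (Derive phi) x0 + H x0 (Derive phi x0) <= lam.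
Proof.
move=> ax0 dphi ddphi cphi e0 [d [d0 Hd]].
have [d0' [d00 Hd0]] := eps_of_cont _ _ (a_cont a kappa a0 alip x0) (a x0 / 2) ltac:(lra).
have apos : forall t, Rabs (t - x0) < d0' -> 0 < a t.
  by move=> t ht; have := Hd0 t ht => /Rabs_lt_between; lra.
have FFf : forall t, 0 < a t -> FF t = f t.
  by move=> t ht; rewrite /FF; case: Rlt_dec.
have Du : forall t, Rabs (t - x0) < d0' -> is_derive u t (f t).
  move=> t ht; rewrite -(FFf t (apos t ht)); apply: u_deriv => eps e.
  have [b1 [b10 Hb1]] := eps_of_cont _ _ (derive_cont _ _ _ (Derive_correct _ _ (fd t (apos t ht)))) eps e.
  set r := d0' - Rabs (t - x0).
  exists (Rmin b1 r); split; first by apply: Rmin_glb_lt => //; rewrite /r; lra.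
  move=> y hy.
  have hy1 : Rabs (y - t) < b1 by apply: (Rlt_le_trans _ _ _ hy); apply: Rmin_l.
  have hy2 : Rabs (y - t) < r by apply: (Rlt_le_trans _ _ _ hy); apply: Rmin_r.
  have ay : 0 < a y.
    apply: apos; have := Rabs_triang (y - t) (t - x0).
    replace (y - t + (t - x0)) with (y - x0) by ring; rewrite /r in hy2; lra.
  rewrite (FFf y ay) (FFf t (apos t ht)); exact: Hb1.
pose g := fun t => u t - phi t.
pose G1 := fun t => f t - Derive phi t.
pose G2 := fun t => Derive f t - Derive (Derive phi) t.
have Dg : forall t, Rabs (t - x0) < d0' -> is_derive g t (G1 t).
  move=> t ht; apply: is_derive_minus; first exact: Du.
  exact: Derive_correct.
have DG1 : forall t, Rabs (t - x0) < d0' -> is_derive G1 t (G2 t).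
  move=> t ht; apply: is_derive_minus; apply: Derive_correct => //.
  exact: fd (apos t ht).
have g0 : g x0 = 0 by rewrite /g e0; ring.
have gpos : forall y, Rabs (y - x0) < d -> 0 <= g y by move=> y hy; have := Hd y hy; rewrite /g; lra.
have md0 : 0 < Rmin d d0' by apply: Rmin_glb_lt.
have md1 : Rmin d d0' <= d := Rmin_l _ _.
have md2 : Rmin d d0' <= d0' := Rmin_r _ _.
have GA : G1 x0 = 0.
  case: (Rtotal_order (G1 x0) 0) => [lt|[eq|gt]] //.
  - have [_ [t [ht1 ht2]]] := deriv_neg_side g x0 _ (Dg x0 ltac:(rewrite Rminus_diag Rabs_R0; lra)) lt (Rmin d d0') md0.
    have := gpos t ltac:(rewrite Rabs_pos_eq; lra); lra.
  - have [[t [ht1 ht2]] _] := deriv_pos_side g x0 _ (Dg x0 ltac:(rewrite Rminus_diag Rabs_R0; lra)) gt (Rmin d d0') md0.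
    have := gpos t ltac:(rewrite Rabs_left; lra); lra.
have hDp : Derive phi x0 = f x0 by rewrite /G1 in GA; lra.
have GB : 0 <= G2 x0.
  apply: Rnot_lt_le => G2n.
  have cG2 : continuity_pt G2 x0 by apply: continuity_pt_minus => //; exact: fc.
  have [d3 [d30 Hd3]] := eps_of_cont _ _ cG2 (- G2 x0) ltac:(lra).
  have G2neg : forall t, Rabs (t - x0) < d3 -> G2 t < 0.
    by move=> t ht; have := Hd3 t ht => /Rabs_lt_between; lra.
  have m0 : 0 < Rmin (Rmin d d0') d3 by apply: Rmin_glb_lt.
  have m1 : Rmin (Rmin d d0') d3 <= Rmin d d0' := Rmin_l _ _.
  have m2 : Rmin (Rmin d d0') d3 <= d3 := Rmin_r _ _.
  remember (Rmin (Rmin d d0') d3 / 2) as s1 eqn:Es1.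
  have G1neg : forall t, x0 < t <= x0 + s1 -> G1 t < 0.
    move=> t ht.
    have := MVT_gen G1 x0 t G2.
    rewrite Rmin_left; last lra. rewrite Rmax_right; last lra.
    case.
    - move=> y hy; apply: DG1; rewrite Rabs_pos_eq; lra.
    - move=> y hy; apply: (derive_cont _ _ (G2 y)); apply: DG1; rewrite Rabs_pos_eq; lra.
    move=> xi [hxi Exi].
    have := G2neg xi ltac:(rewrite Rabs_pos_eq; lra).
    move=> hn; have : G2 xi * (t - x0) < 0 by apply: Rmult_neg_pos => //; lra.
    lra.
  have MV : forall v w, x0 <= v -> v < w -> w <= x0 + s1 ->
      exists xi, v <= xi <= w /\ g w - g v = G1 xi * (w - v).
    move=> v w h1 h2 h3.
    have := MVT_gen g v w G1.
    rewrite Rmin_left; last lra. rewrite Rmax_right; last lra.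
    case.
    - move=> y hy; apply: Dg; rewrite Rabs_pos_eq; lra.
    - move=> y hy; apply: (derive_cont _ _ (G1 y)); apply: Dg; rewrite Rabs_pos_eq; lra.
    by move=> xi hxi; exists xi.
  have [xi [hxi E1]] := MV x0 (x0 + s1 / 2) ltac:(lra) ltac:(lra) ltac:(lra).
  have [xi' [hxi' E2]] := MV (x0 + s1 / 2) (x0 + s1) ltac:(lra) ltac:(lra) ltac:(lra).
  have h1 : G1 xi <= 0.
    case: (Rle_lt_or_eq_dec _ _ (proj1 hxi)) => [lt|eq].
      left; apply: G1neg; lra.
    by rewrite -eq GA; lra.
  have h2 : G1 xi' < 0 by apply: G1neg; lra.
  have : g (x0 + s1 / 2) <= 0.
    rewrite g0 in E1; have : G1 xi * (x0 + s1 / 2 - x0) <= 0.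
      apply: Rmult_le_0_r => //; lra.
    lra.
  have : g (x0 + s1) - g (x0 + s1 / 2) < 0.
    rewrite E2; apply: Rmult_neg_pos => //; lra.
  have := gpos (x0 + s1) ltac:(rewrite Rabs_pos_eq; lra).
  lra.
have feq0 := feq x0 ax0.
rewrite hDp.
rewrite /G2 in GB.
nra.
Qed.

Lemma master phi x0 : (forall x, ex_derive phi x) ->
  (forall x, ex_derive (Derive phi) x) -> (forall x, continuity_pt (Derive (Derive phi)) x) ->
  phi x0 = u x0 -> (exists d, 0 < d /\ forall y, Rabs (y - x0) < d -> phi y <= u y) ->
  a x0 * Derive (Derive phi) x0 + H x0 (Derive phi x0) <= lam.
Proof.
move=> d1 d2 c2 e0 hd.
case: (Rlt_dec 0 (a x0)) => ax.
  exact: visc_pos.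
have az : a x0 = 0 by have := a0 x0; lra.
rewrite az Rmult_0_l Rplus_0_l.
apply: (visc_zero x0 phi) => //.
exact: Derive_correct.
Qed.
End HSec.

Section HSec3.
Variables (H : R -> R -> R) (eta lam L0 U0 : R) (phat : R -> R).
Hypothesis eta0 : 0 < eta.
Hypothesis HL : forall x p, L0 <= H x p.
Hypothesis HU : forall x, H x 0 <= U0.
Hypothesis Heta1 : forall x p1 p2, p1 < p2 <= phat x -> H x p1 - H x p2 >= eta * Rabs (p1 - p2).
Hypothesis Heta2 : forall x p1 p2, phat x <= p1 < p2 -> H x p2 - H x p1 >= eta * Rabs (p1 - p2).
Variables (a f : R -> R) (M : R).
Hypothesis a0 : forall x, 0 <= a x.
Hypothesis fM : forall x, 0 < a x -> Rabs (f x) <= M.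
Hypothesis Hzero : forall x, a x = 0 -> H x (phat x) < lam.

Lemma FF_bound x : Rabs (FF H lam a f x) <= Rmax M ((U0 - L0) / eta + Dd eta lam L0).
Proof.
rewrite /FF; case: Rlt_dec => ax.
  by apply: (Rle_trans _ _ _ (fM x ax)); apply: Rmax_l.
apply: (Rle_trans _ _ _ _ (Rmax_r _ _)).
have az : a x = 0 by have := a0 x; lra.
have [h1 h2] := pp_bounds H eta lam L0 phat eta0 HL Heta2 x (phat x) ltac:(left; exact: Hzero).
have := phat_bound H eta L0 U0 phat eta0 HL HU Heta1 Heta2 x.
have : 0 <= Dd eta lam L0.
  rewrite /Dd; apply: Rmult_le_pos; [exact: Rabs_pos| left; exact: Rinv_0_lt_compat].
move=> hD /Rabs_le_between hp; apply/Rabs_le_between; simpl; lra.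
Qed.
End HSec3.


End MB.
Import MB.

Open Scope R_scope.

Lemma rpow_ge0 x y : 0 <= rpow x y.
Proof. apply/RleP; exact: powR_ge0. Qed.

Lemma rpow_mono x y r : 0 <= r -> 0 <= x -> x <= y -> rpow x r <= rpow y r.
Proof.
move=> /RleP r0 /RleP x0 /RleP xy; apply/RleP; rewrite /rpow.
apply: (ge0_ler_powR r0) => //; rewrite Num.Theory.nnegrE //.
exact: (mathcomp.order.order.Order.POrderTheory.le_trans x0 xy).
Qed.

Theorem mainTheorem15 (a : R -> R) (kappa : R) (H : R -> R -> R)
  (alpha0 alpha1 gamma eta lam : R) (f : R -> R) :
  (forall x : R, 0 <= a x <= 1) ->
  sqrt_lipschitz a kappa ->
  A1' a ->
  2 < gamma -> 0 < eta ->
  H_sqc H alpha0 alpha1 gamma eta ->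
  Rbar_lt (sup_hat_lambda_zero a H) (Finite lam) ->
  C1_on_A a f ->
  bounded_on_A a f ->
  (forall x : R, 0 < a x -> a x * Derive f x + H x (f x) = lam) ->
  lipschitz_R (prim0 (extend_f a H lam f)) /\
  visc_supersolution a H lam (prim0 (extend_f a H lam f)).
Proof.
move=> a01 alip _ g2 eta0 [al0 [H1 [H2 [H3 [Hqc [phat [Hmin [_ [He1 He2]]]]]]]]] hsup fC1 [M fM] feq.
have a0 : forall x, 0 <= a x by move=> x; case: (a01 x).
set L0 := - (1 / alpha0).
have HL : forall x p, L0 <= H x p.
  move=> x p; have [h _] := H1 x p; have := rpow_ge0 (Rabs p) gamma.
  rewrite /L0; nra.
set U0 := alpha1 * (rpow (Rabs 0) gamma + 1).
have HU : forall x, H x 0 <= U0 by move=> x; case: (H1 x 0).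
have Hxc : forall p x eps, 0 < eps -> exists d, 0 < d /\
    forall y, Rabs (y - x) < d -> Rabs (H y p - H x p) < eps.
  move=> p x eps e0.
  set C := Rabs (alpha1 * (rpow (Rabs p) gamma + 1)) + 1.
  have C0 : 0 < C by have := Rabs_pos (alpha1 * (rpow (Rabs p) gamma + 1)); rewrite /C; lra.
  exists (eps / C); split; first exact: Rdiv_lt_0_compat.
  move=> y hy; apply: (Rle_lt_trans _ _ _ (H3 y x p)).
  have := Rle_abs (alpha1 * (rpow (Rabs p) gamma + 1)).
  have := Rabs_pos (y - x).
  have : Rabs (y - x) * C < eps.
    have := Rmult_lt_compat_r C _ _ C0 hy.
    by rewrite /Rdiv Rmult_assoc Rinv_l; [rewrite Rmult_1_r|lra].
  rewrite /C; nra.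
have Hjc : forall x0 p0 eps, 0 < eps -> exists d, 0 < d /\
    forall z q, Rabs (z - x0) < d -> Rabs (q - p0) < d -> Rabs (H z q - H x0 p0) < eps.
  move=> x0 p0 eps e0.
  set B := rpow (2 * Rabs p0 + 2) (gamma - 1).
  set A1 := Rabs alpha1 * B + 1.
  have B0 : 0 <= B by exact: rpow_ge0.
  have A10 : 0 < A1 by have := Rabs_pos alpha1; rewrite /A1; nra.
  have [dx [dx0 Hdx]] := Hxc p0 x0 (eps / 2) ltac:(lra).
  set d := Rmin 1 (Rmin (eps / (2 * A1)) dx).
  have d0 : 0 < d.
    apply: Rmin_glb_lt; first lra.
    apply: Rmin_glb_lt => //; apply: Rdiv_lt_0_compat; lra.
  have d1 : d <= 1 by apply: Rmin_l.
  have d2 : d <= eps / (2 * A1) by apply: (Rle_trans _ _ _ (Rmin_r _ _)); apply: Rmin_l.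
  have d3 : d <= dx by apply: (Rle_trans _ _ _ (Rmin_r _ _)); apply: Rmin_r.
  exists d; split => // z q hz hq.
  have h1 : Rabs (H z p0 - H x0 p0) < eps / 2 by apply: Hdx; lra.
  have h2 : Rabs (H z q - H z p0) < eps / 2.
    apply: (Rle_lt_trans _ _ _ (H2 z q p0)).
    have hr : rpow (Rabs q + Rabs p0 + 1) (gamma - 1) <= B.
      apply: rpow_mono; first lra.
        have := Rabs_pos q; have := Rabs_pos p0; lra.
      have := Rabs_triang_inv q p0; lra.
    have hr0 := rpow_ge0 (Rabs q + Rabs p0 + 1) (gamma - 1).
    have ha := Rle_abs alpha1.
    have hqa := Rabs_pos (q - p0).
    have : A1 * Rabs (q - p0) < eps / 2.
      have := Rmult_lt_compat_l A1 _ _ A10 (Rlt_le_trans _ _ _ hq d2).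
      have -> : A1 * (eps / (2 * A1)) = eps / 2 by field; lra.
      by [].
    have : alpha1 * rpow (Rabs q + Rabs p0 + 1) (gamma - 1) <= Rabs alpha1 * B.
      have := Rabs_pos alpha1; nra.
    rewrite /A1; nra.
  have := Rabs_triang (H z q - H z p0) (H z p0 - H x0 p0).
  replace (H z q - H z p0 + (H z p0 - H x0 p0)) with (H z q - H x0 p0) by ring.
  lra.
have Hzero : forall x, a x = 0 -> H x (phat x) < lam.
  move=> x ax.
  have hl : hat_lambda H x = H x (phat x).
    rewrite /hat_lambda (is_glb_Rbar_unique _ (Finite (H x (phat x)))) //.
    split.
      by move=> v [p ->]; apply: Hmin.
    by move=> b hb; apply: hb; exists (phat x).
  have [ub _] := Lub_Rbar_correct (fun v => exists x, a x = 0 /\ v = hat_lambda H x).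
  have := ub (hat_lambda H x) ltac:(by exists x).
  move: hsup; rewrite /sup_hat_lambda_zero hl.
  case: (Lub_Rbar _) => [r||] //= h1 h2; lra.
have fd : forall x, 0 < a x -> ex_derive f x by move=> x hx; case: (fC1 x hx).
have fc : forall x, 0 < a x -> continuity_pt (Derive f) x.
  by move=> x hx; case: (fC1 x hx) => _ hc; apply/continuity_pt_filterlim.
have alip' : forall x y, Rabs (sqrt (a x) - sqrt (a y)) <= kappa * Rabs (x - y) by exact: alip.
set K := Rmax M ((U0 - L0) / eta + Dd eta lam L0).
have FK := FF_bound H eta lam L0 U0 phat eta0 HL HU He1 He2 a f M a0 fM Hzero.
change (extend_f a H lam f) with (FF H lam a f).
have mF : measurable_fun setT (FF H lam a f : RR -> RR).
  have -> : FF H lam a f = (fun x => if (fun x => is_left (Rlt_dec 0 (a x))) x then f x else pp H lam x).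
    by apply: boolp.funext => x; rewrite /FF; case: Rlt_dec.
  apply: (meas_piece _ _ _ [set x : RR | exists q, H x q < lam]%classic).
  - apply: open_epsdelta => x /=; case: Rlt_dec => // ax _.
    have [d [d0 Hd]] := eps_of_cont _ _ (a_cont a kappa a0 alip' x) (a x / 2) ltac:(lra).
    exists d; split => // y hy; case: Rlt_dec => // ay; exfalso; apply: ay.
    by have := Hd y hy => /Rabs_lt_between; lra.
  - apply: open_epsdelta => x [q hq].
    have [d [d0 Hd]] := Hxc q x (lam - H x q) ltac:(lra).
    exists d; split => // y hy; exists q.
    by have := Hd y hy => /Rabs_lt_between; lra.
  - move=> x /=; case: Rlt_dec => // ax _; exists (phat x); apply: Hzero.
    by have := a0 x; lra.
  - move=> x /=; case: Rlt_dec => // ax _.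
    exact: (derive_cont _ _ _ (Derive_correct _ _ (fd x ax))).
  - by move=> x [q hq]; exact: (pp_cont H eta lam L0 phat eta0 HL Hxc Hqc He2 x q hq).
have Hu := prim0_bound (FF H lam a f) K mF FK.
set u := prim0 (FF H lam a f).
have ulip : forall x y, Rabs (u x - u y) <= K * Rabs (x - y).
  move=> x y; case: (Rle_lt_dec x y) => xy.
  - have := Hu x y 0 K xy ltac:(move=> t _; rewrite Rminus_0_r; exact: FK).
    rewrite Rmult_0_l Rminus_0_r -Rabs_Ropp Ropp_minus_distr (Rabs_left1 (x - y)); last lra.
    by rewrite Ropp_minus_distr.
  - have := Hu y x 0 K ltac:(lra) ltac:(move=> t _; rewrite Rminus_0_r; exact: FK).
    by rewrite Rmult_0_l Rminus_0_r (Rabs_pos_eq (x - y)); last lra.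
split; first by exists K.
split.
  move=> x; apply/continuity_pt_filterlim; apply: cont_of_eps => eps e0.
  exists (eps / (Rabs K + 1)); split.
    apply: Rdiv_lt_0_compat => //; have := Rabs_pos K; lra.
  move=> y hy; apply: (Rle_lt_trans _ _ _ (ulip y x)).
  have k0 := Rabs_pos K.
  have hy' : Rabs (y - x) * (Rabs K + 1) < eps.
    have := Rmult_lt_compat_r (Rabs K + 1) _ _ ltac:(lra) hy.
    by rewrite /Rdiv Rmult_assoc Rinv_l; [rewrite Rmult_1_r|lra].
  have := Rle_abs K; have := Rabs_pos (y - x); nra.
move=> phi x0 hphi [e0 hd].
apply: (master H eta lam L0 phat eta0 HL Hxc He1 He2 Hjc a kappa f M K u a0 alip'
  fM fd feq Hzero FK Hu fc phi x0) => //.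
- by move=> x; case: (hphi x).
- by move=> x; case: (hphi x) => _ [].
- by move=> x; case: (hphi x) => _ [_ hc]; apply/continuity_pt_filterlim.
Qed.
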